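(* Let $\mathcal{X}_1,\mathcal{X}_2$ be non-empty sets (of arbitrary cardinality), let $\mathcal{B}_1\subseteq\mathcal{P}(\mathcal{X}_1)\setminus\{\emptyset\}$ and $\mathcal{B}_2\subseteq\mathcal{P}(\mathcal{X}_2)\setminus\{\emptyset\}$ be arbitrary sets of conditioning events, and for $i\in\{1,2\}$ let $\mathcal{D}_i$ be a coherent set of desirable gambles on $\mathcal{X}_i$. Then $$\mathcal{D}_1\otimes\mathcal{D}_2:=\mathcal{E}\big(\mathcal{A}_{1\to2}\cup\mathcal{A}_{2\to1}\big),$$ where $\mathcal{A}_{1\to2}:=\{f_2(X_2)\mathbb{I}_{B_1}(X_1)\colon f_2\in\mathcal{D}_2,\ B_1\in\mathcal{B}_1\cup\{\mathcal{X}_1\}\}$ and $\mathcal{A}_{2\to1}:=\{f_1(X_1)\mathbb{I}_{B_2}(X_2)\colon f_1\in\mathcal{D}_1,\ B_2\in\mathcal{B}_2\cup\{\mathcal{X}_2\}\}$, is the independent natural extension of $\mathcal{D}_1$ and $\mathcal{D}_2$; that is, it is an independent product of $\mathcal{D}_1$ and $\mathcal{D}_2$, and it is a subset of every independent product of $\mathcal{D}_1$ and $\mathcal{D}_2$.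
   Context: A gamble on a non-empty set $\mathcal{X}$ is a bounded function $\mathcal{X}\to\mathbb{R}$; $\mathcal{G}(\mathcal{X})$ denotes the set of gambles and $\mathcal{G}_{>0}(\mathcal{X})$ the set of non-negative gambles that are not identically zero. $\mathbb{I}_A$ is the indicator of $A$. For $\mathcal{A}\subseteq\mathcal{G}(\mathcal{X})$, $\mathrm{posi}(\mathcal{A}):=\{\sum_{i=1}^n\lambda_if_i\colon n\in\mathbb{N}, \lambda_i\in\mathbb{R}_{>0}, f_i\in\mathcal{A}\}$ and $\mathcal{E}(\mathcal{A}):=\mathrm{posi}(\mathcal{A}\cup\mathcal{G}_{>0}(\mathcal{X}))$. A coherent set of desirable gambles on $\mathcal{X}$ is a set $\mathcal{D}\subseteq\mathcal{G}(\mathcal{X})$ such that for all $f,g\in\mathcal{G}(\mathcal{X})$ and $\lambda>0$: (D1) if $f\geq0$ and $f\neq0$ then $f\in\mathcal{D}$; (D2) if $f\in\mathcal{D}$ then $\lambda f\in\mathcal{D}$; (D3) if $f,g\in\mathcal{D}$ then $f+g\in\mathcal{D}$; (D4) if $f\leq0$ then $f\notin\mathcal{D}$. For $i\in\{1,2\}$, a gamble $f$ on $\mathcal{X}_i$ is identified with its cylindrical extension $f(X_i)$ on $\mathcal{X}_1\times\mathcal{X}_2$, $f(X_i)(x_1,x_2):=f(x_i)$; similarly an event $B\subseteq\mathcal{X}_1$ is identified with $B\times\mathcal{X}_2$ and $B\subseteq\mathcal{X}_2$ with $\mathcal{X}_1\times B$. For a set $\mathcal{D}$ of gambles on $\mathcal{X}_1\times\mathcal{X}_2$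 and $\{i,j\}=\{1,2\}$, let $\mathrm{marg}_i(\mathcal{D}):=\{f\in\mathcal{G}(\mathcal{X}_i)\colon f(X_i)\in\mathcal{D}\}$ and, for non-empty $B_j\subseteq\mathcal{X}_j$, $\mathrm{marg}_i(\mathcal{D}\rfloor B_j):=\{f\in\mathcal{G}(\mathcal{X}_i)\colon f(X_i)\mathbb{I}_{B_j}(X_j)\in\mathcal{D}\}$. A coherent set of desirable gambles $\mathcal{D}$ on $\mathcal{X}_1\times\mathcal{X}_2$ is epistemically independent (w.r.t. $\mathcal{B}_1,\mathcal{B}_2$) if $\mathrm{marg}_i(\mathcal{D}\rfloor B_j)=\mathrm{marg}_i(\mathcal{D})$ for all $\{i,j\}=\{1,2\}$ and all $B_j\in\mathcal{B}_j$. An independent product of $\mathcal{D}_1$ and $\mathcal{D}_2$ is an epistemically independent coherent set of desirable gambles $\mathcal{D}$ on $\mathcal{X}_1\times\mathcal{X}_2$ with $\mathrm{marg}_1(\mathcal{D})=\mathcal{D}_1$ and $\mathrm{marg}_2(\mathcal{D})=\mathcal{D}_2$. The independent natural extension is the smallest (w.r.t. inclusion) independent product. *)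

(* Defs.v *)
From Stdlib Require Import Reals List Classical ClassicalEpsilon.
Open Scope R_scope.

(* A gamble on X: a bounded function X -> R. *)
Definition bounded {X : Type} (f : X -> R) : Prop :=
  exists M : R, forall x, Rabs (f x) <= M.

Definition gset (X : Type) := (X -> R) -> Prop.

Definition Gpos {X : Type} : gset X :=
  fun f => bounded f /\ (forall x, 0 <= f x) /\ (exists x, f x <> 0).

Definition posi {X : Type} (A : gset X) : gset X :=
  fun f => exists l : list (R * (X -> R)),
    l <> nil /\
    Forall (fun p => 0 < fst p /\ A (snd p)) l /\
    (forall x, f x = fold_right (fun p acc => fst p * snd p x + acc) 0 l).

Definition E {X : Type} (A : gset X) : gset X :=
  posi (fun f => A f \/ Gpos f).

Definition coherent {X : Type} (D : gset X) : Prop :=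
  (forall f, D f -> bounded f) /\
  (forall f, bounded f -> (forall x, 0 <= f x) -> (exists x, f x <> 0) -> D f) /\
  (forall f (lam : R), 0 < lam -> D f -> D (fun x => lam * f x)) /\
  (forall f g, D f -> D g -> D (fun x => f x + g x)) /\
  (forall f, bounded f -> (forall x, f x <= 0) -> ~ D f).

Definition ind {X : Type} (B : X -> Prop) (x : X) : R :=
  if excluded_middle_informative (B x) then 1 else 0.

Definition marg1 {X1 X2 : Type} (D : gset (X1 * X2)) : gset X1 :=
  fun f => bounded f /\ D (fun z => f (fst z)).
Definition marg2 {X1 X2 : Type} (D : gset (X1 * X2)) : gset X2 :=
  fun f => bounded f /\ D (fun z => f (snd z)).
Definition cmarg1 {X1 X2 : Type} (D : gset (X1 * X2)) (B2 : X2 -> Prop) : gset X1 :=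
  fun f => bounded f /\ D (fun z => f (fst z) * ind B2 (snd z)).
Definition cmarg2 {X1 X2 : Type} (D : gset (X1 * X2)) (B1 : X1 -> Prop) : gset X2 :=
  fun f => bounded f /\ D (fun z => f (snd z) * ind B1 (fst z)).

Definition gset_eq {X : Type} (A B : gset X) : Prop := forall f, A f <-> B f.

Definition epist_indep {X1 X2 : Type}
    (BB1 : (X1 -> Prop) -> Prop) (BB2 : (X2 -> Prop) -> Prop)
    (D : gset (X1 * X2)) : Prop :=
  coherent D /\
  (forall B2, BB2 B2 -> gset_eq (cmarg1 D B2) (marg1 D)) /\
  (forall B1, BB1 B1 -> gset_eq (cmarg2 D B1) (marg2 D)).

Definition indep_product {X1 X2 : Type}
    (BB1 : (X1 -> Prop) -> Prop) (BB2 : (X2 -> Prop) -> Prop)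
    (D1 : gset X1) (D2 : gset X2) (D : gset (X1 * X2)) : Prop :=
  epist_indep BB1 BB2 D /\ gset_eq (marg1 D) D1 /\ gset_eq (marg2 D) D2.

Definition A12 {X1 X2 : Type} (BB1 : (X1 -> Prop) -> Prop) (D2 : gset X2)
  : gset (X1 * X2) :=
  fun g => exists f2 B1, D2 f2 /\ (BB1 B1 \/ B1 = (fun _ => True)) /\
    g = (fun z => f2 (snd z) * ind B1 (fst z)).
Definition A21 {X1 X2 : Type} (BB2 : (X2 -> Prop) -> Prop) (D1 : gset X1)
  : gset (X1 * X2) :=
  fun g => exists f1 B2, D1 f1 /\ (BB2 B2 \/ B2 = (fun _ => True)) /\
    g = (fun z => f1 (fst z) * ind B2 (snd z)).

Definition indep_nat_ext {X1 X2 : Type}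
    (BB1 : (X1 -> Prop) -> Prop) (BB2 : (X2 -> Prop) -> Prop)
    (D1 : gset X1) (D2 : gset X2) : gset (X1 * X2) :=
  E (fun g => A12 BB1 D2 g \/ A21 BB2 D1 g).

(* Main.v *)
Require Import Defs.
From Stdlib Require Import Reals List Classical ClassicalEpsilon FunctionalExtensionality Lra Lia Arith.
Import Defs.
Open Scope R_scope.


Fixpoint sumR (n : nat) (f : nat -> R) : R :=
  match n with O => 0 | S k => sumR k f + f k end.

Lemma sumR_ext n f g : (forall i, (i < n)%nat -> f i = g i) -> sumR n f = sumR n g.
Proof. induction n; simpl; intros H; auto. rewrite IHn by (intros; apply H; lia). rewrite H by lia. auto. Qed.

Lemma sumR_lin n p q f g : sumR n (fun i => p * f i + q * g i) = p * sumR n f + q * sumR n g.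
Proof. induction n; simpl. ring. rewrite IHn. ring. Qed.

Lemma sumR_scal n c f : sumR n (fun i => c * f i) = c * sumR n f.
Proof. induction n; simpl. ring. rewrite IHn. ring. Qed.

Lemma sumR_nonneg n f : (forall i, (i < n)%nat -> 0 <= f i) -> 0 <= sumR n f.
Proof. induction n; simpl; intros H. lra. assert (0 <= f n) by (apply H; lia).
 assert (0 <= sumR n f) by (apply IHn; intros; apply H; lia). lra. Qed.

Lemma sumR_ge_term n f i : (forall i, (i < n)%nat -> 0 <= f i) -> (i < n)%nat -> f i <= sumR n f.
Proof. induction n; simpl; intros H Hi. lia.
 destruct (Nat.eq_dec i n). subst. assert (0 <= sumR n f) by (apply sumR_nonneg; intros; apply H; lia). lra.
 assert (f i <= sumR n f) by (apply IHn; [intros; apply H; lia | lia]). assert (0 <= f n) by (apply H; lia). lra. Qed.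

Lemma sumR_zero n f : (forall i, (i < n)%nat -> f i = 0) -> sumR n f = 0.
Proof. induction n; simpl; intros H. auto. rewrite IHn by (intros; apply H; lia). rewrite H by lia. ring. Qed.

Definition mix {Y : Type} (nu : list (R * Y)) (f : Y -> R) : R :=
  fold_right (fun p acc => fst p * f (snd p) + acc) 0 nu.

Lemma mix_app {Y} (l1 l2 : list (R*Y)) f : mix (l1 ++ l2) f = mix l1 f + mix l2 f.
Proof. induction l1; simpl. ring. unfold mix in *; simpl. rewrite IHl1. ring. Qed.

Lemma mix_lin {Y} (nu : list (R*Y)) p q f g : mix nu (fun y => p * f y + q * g y) = p * mix nu f + q * mix nu g.
Proof. induction nu; unfold mix in *; simpl. ring. rewrite IHnu. ring. Qed.

Lemma mix_ext {Y} (nu : list (R*Y)) f g : (forall y, f y = g y) -> mix nu f = mix nu g.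
Proof. intros H. f_equal. apply functional_extensionality; auto. Qed.

Lemma mix_scal {Y} (nu : list (R*Y)) c f : mix nu (fun y => c * f y) = c * mix nu f.
Proof. induction nu; unfold mix in *; simpl. ring. rewrite IHnu. ring. Qed.

Lemma mix_plus {Y} (nu : list (R*Y)) f g : mix nu (fun y => f y + g y) = mix nu f + mix nu g.
Proof. induction nu; unfold mix in *; simpl. ring. rewrite IHnu. ring. Qed.

Lemma mix_sumR {Y} (nu : list (R*Y)) n (F : nat -> Y -> R) :
  mix nu (fun y => sumR n (fun i => F i y)) = sumR n (fun i => mix nu (F i)).
Proof. induction n; simpl. unfold mix; induction nu; simpl; auto. rewrite IHnu; ring.
 rewrite mix_plus. rewrite IHn. auto. Qed.

Lemma mix_nonneg {Y} (nu : list (R*Y)) f : Forall (fun p => 0 <= fst p) nu -> (forall y, 0 <= f y) -> 0 <= mix nu f.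
Proof. induction nu; unfold mix in *; simpl; intros H1 H2. lra. inversion H1; subst.
 specialize (IHnu H4 H2). assert (0 <= fst a * f (snd a)) by (apply Rmult_le_pos; auto). lra. Qed.

Lemma mix_le {Y} (nu : list (R*Y)) f g : Forall (fun p => 0 <= fst p) nu -> (forall y, f y <= g y) -> mix nu f <= mix nu g.
Proof. intros H1 H2. assert (0 <= mix nu (fun y => 1 * g y + (-1) * f y)).
 apply mix_nonneg; auto. intros y; specialize (H2 y); lra. rewrite mix_lin in H. lra. Qed.

Lemma mix_map_scale {Y} (nu : list (R*Y)) k f : mix (map (fun p => (k * fst p, snd p)) nu) f = k * mix nu f.
Proof. induction nu; unfold mix in *; simpl. ring. rewrite IHnu. ring. Qed.

Lemma key : forall m (Y : Type) (a : nat -> Y -> R),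
  (forall lam : nat -> R, (forall i, (i < m)%nat -> 0 <= lam i) -> (exists i, (i < m)%nat /\ lam i <> 0) ->
     exists y, 0 < sumR m (fun i => lam i * a i y)) ->
  exists nu : list (R * Y), Forall (fun p => 0 <= fst p) nu /\ forall i, (i < m)%nat -> 0 < mix nu (a i).
Proof.
  induction m; intros Y a H.
  - exists nil. split; [constructor | intros; lia].
  - set (c := a m).
    assert (Hys : exists ys, 0 < c ys).
    { destruct (H (fun i => if Nat.eq_dec i m then 1 else 0)) as [y Hy].
      - intros i _. destruct (Nat.eq_dec i m); lra.
      - exists m. split. lia. destruct (Nat.eq_dec m m); [lra | congruence].
      - exists y. simpl in Hy. rewrite sumR_zero in Hy.
        + destruct (Nat.eq_dec m m); [unfold c; lra | congruence].
        + intros i Hi. destruct (Nat.eq_dec i m). lia. ring. }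
    destruct Hys as [ys Hys].
    set (a' := fun i (y' : Y + (Y * Y)) =>
      match y' with
      | inl y => if Rle_dec 0 (c y) then a i y else 0
      | inr (y, z) => if Rlt_dec 0 (c y) then if Rlt_dec (c z) 0 then c y * a i z - c z * a i y else 0 else 0
      end).
    destruct (IHm _ a') as [nu' [Hnu'1 Hnu'2]].
    + intros lam Hnn Hnz. apply NNPP; intro Hno.
      assert (Hle : forall y', sumR m (fun i => lam i * a' i y') <= 0).
      { intros y'. apply Rnot_lt_le. intro Hc. apply Hno. exists y'. auto. }
      set (L := fun y => sumR m (fun i => lam i * a i y)).
      assert (F1 : forall y, 0 <= c y -> L y <= 0).
      { intros y Hy. specialize (Hle (inl y)). unfold L. rewrite <- Hle. right.
        apply sumR_ext. intros i _. unfold a'. destruct (Rle_dec 0 (c y)); [auto | lra]. }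
      assert (F2 : forall y z, 0 < c y -> c z < 0 -> c y * L z - c z * L y <= 0).
      { intros y z Hy Hz. specialize (Hle (inr (y, z))). unfold L.
        replace (c y * sumR m (fun i => lam i * a i z) - c z * sumR m (fun i => lam i * a i y))
          with (sumR m (fun i => lam i * a' i (inr (y, z)))). auto.
        replace (c y * sumR m (fun i => lam i * a i z) - c z * sumR m (fun i => lam i * a i y)) with
          (c y * sumR m (fun i => lam i * a i z) + (- c z) * sumR m (fun i => lam i * a i y)) by ring.
        rewrite <- (sumR_lin m (c y) (- c z)). apply sumR_ext. intros i _. unfold a'.
        destruct (Rlt_dec 0 (c y)); [|lra]. destruct (Rlt_dec (c z) 0); [|lra]. ring. }
      assert (Hl0 : exists l0, 0 <= l0 /\ forall y, l0 * c y + L y <= 0).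
      { destruct (classic (exists z, c z < 0)) as [Hneg | Hnoneg].
        - set (S := fun t => exists z, c z < 0 /\ t = L z / (- c z)).
          assert (Sub : forall y, 0 < c y -> is_upper_bound S (- L y / c y)).
          { intros y Hy t [z [Hz ->]]. specialize (F2 y z Hy Hz).
            apply (Rmult_le_reg_r (c y * - c z)). nra.
            replace (L z / - c z * (c y * - c z)) with (L z * c y) by (field; lra).
            replace (- L y / c y * (c y * - c z)) with (L y * c z) by (field; lra). nra. }
          destruct (completeness S) as [s [Hs1 Hs2]].
          + exists (- L ys / c ys). apply Sub; auto.
          + destruct Hneg as [z Hz]. exists (L z / - c z). exists z. auto.
          + exists (Rmax 0 s). split. apply Rmax_l. intros y.
            destruct (Rtotal_order (c y) 0) as [Hc | [Hc | Hc]].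
            * assert (L y / - c y <= s) by (apply Hs1; exists y; auto).
              assert (s <= Rmax 0 s) by apply Rmax_r.
              assert (L y / - c y * - c y = L y) by (field; lra).
              assert (L y / - c y * - c y <= Rmax 0 s * - c y) by (apply Rmult_le_compat_r; lra). lra.
            * rewrite Hc. rewrite Rmult_0_r. specialize (F1 y). lra.
            * assert (L y <= 0) by (apply F1; lra).
              assert (0 <= - L y / c y) by (unfold Rdiv; apply Rmult_le_pos; [lra | left; apply Rinv_0_lt_compat; lra]).
              assert (s <= - L y / c y) by (apply Hs2; apply Sub; auto).
              assert (Rmax 0 s <= - L y / c y) by (apply Rmax_lub; lra).
              assert (Rmax 0 s * c y <= - L y / c y * c y) by (apply Rmult_le_compat_r; lra).
              assert (- L y / c y * c y = - L y) by (field; lra). lra.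
        - exists 0. split. lra. intros y. rewrite Rmult_0_l. rewrite Rplus_0_l. apply F1.
          apply Rnot_lt_le. intro. apply Hnoneg. exists y. auto. }
      destruct Hl0 as [l0 [Hl0a Hl0b]].
      destruct (H (fun i => if Nat.eq_dec i m then l0 else lam i)) as [y Hy].
      * intros i Hi. destruct (Nat.eq_dec i m). auto. apply Hnn. lia.
      * destruct Hnz as [i [Hi Hli]]. exists i. split. lia. destruct (Nat.eq_dec i m). lia. auto.
      * simpl in Hy. rewrite (sumR_ext m _ (fun i => lam i * a i y)) in Hy.
        -- destruct (Nat.eq_dec m m); [|congruence]. specialize (Hl0b y). fold (L y) in Hy. unfold c in Hl0b. lra.
        -- intros i Hi. destruct (Nat.eq_dec i m). lia. auto.
    + set (back := fun (p : R * (Y + (Y * Y))) =>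
        match snd p with
        | inl y => if Rle_dec 0 (c y) then (fst p, y) :: nil else nil
        | inr (y, z) => if Rlt_dec 0 (c y) then if Rlt_dec (c z) 0 then (fst p * c y, z) :: (fst p * - c z, y) :: nil else nil else nil
        end).
      set (nu1 := flat_map back nu').
      assert (Hmix : forall i, mix nu1 (a i) = mix nu' (a' i)).
      { intros i.
        assert (Hb : forall p, mix (back p) (a i) = fst p * a' i (snd p)).
        { intros [w [y|[y z]]]; unfold back, a'; simpl.
          - destruct (Rle_dec 0 (c y)); unfold mix; simpl; ring.
          - destruct (Rlt_dec 0 (c y)); [destruct (Rlt_dec (c z) 0)|]; unfold mix; simpl; ring. }
        unfold nu1. clear Hnu'2 Hnu'1. induction nu'; simpl. auto.
        rewrite mix_app, Hb, IHnu'. reflexivity. }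
      assert (Hw1 : Forall (fun p => 0 <= fst p) nu1).
      { unfold nu1. clear Hnu'2 Hmix. induction nu'; simpl. constructor. inversion Hnu'1; subst.
        apply Forall_app. split; [|auto]. unfold back. destruct a0 as [w [y | [y z]]]; simpl in *.
        - destruct (Rle_dec 0 (c y)); repeat (apply Forall_cons; [simpl; nra|]); constructor.
        - destruct (Rlt_dec 0 (c y)); [destruct (Rlt_dec (c z) 0)|]; repeat (apply Forall_cons; [simpl; nra|]); constructor. }
      assert (Hc0 : 0 <= mix nu1 c).
      { unfold c. rewrite Hmix. apply mix_nonneg; auto. intros [y | [y z]]; unfold a'; fold c.
        - destruct (Rle_dec 0 (c y)); lra.
        - destruct (Rlt_dec 0 (c y)); [destruct (Rlt_dec (c z) 0)|]; nra. }
      set (K := sumR m (fun i => Rabs (a i ys) / mix nu1 (a i)) + 1).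
      assert (HK : forall i, (i < m)%nat -> Rabs (a i ys) / mix nu1 (a i) + 1 <= K).
      { intros i Hi. unfold K. assert (Rabs (a i ys) / mix nu1 (a i) <= sumR m (fun i => Rabs (a i ys) / mix nu1 (a i))).
        apply (sumR_ge_term m (fun i => Rabs (a i ys) / mix nu1 (a i))); auto.
        intros j Hj. unfold Rdiv. apply Rmult_le_pos. apply Rabs_pos. left. apply Rinv_0_lt_compat. rewrite Hmix; auto. lra. }
      assert (HK0 : 0 <= K).
      { unfold K. assert (0 <= sumR m (fun i => Rabs (a i ys) / mix nu1 (a i))). apply sumR_nonneg.
        intros j Hj. unfold Rdiv. apply Rmult_le_pos. apply Rabs_pos. left. apply Rinv_0_lt_compat. rewrite Hmix; auto. lra. }
      exists ((1, ys) :: map (fun p => (K * fst p, snd p)) nu1). split.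
      * constructor. simpl; lra. apply Forall_map. eapply Forall_impl; [|exact Hw1]. simpl. intros p Hp. nra.
      * assert (Hm : forall f, mix ((1, ys) :: map (fun p => (K * fst p, snd p)) nu1) f = f ys + K * mix nu1 f).
        { intros f. change (1 * f ys + mix (map (fun p => (K * fst p, snd p)) nu1) f = f ys + K * mix nu1 f).
          rewrite mix_map_scale. ring. }
        intros i Hi. rewrite Hm. destruct (Nat.eq_dec i m).
        -- subst. fold c. nra.
        -- assert (Him : (i < m)%nat) by lia. specialize (HK i Him).
           assert (HM : 0 < mix nu1 (a i)) by (rewrite Hmix; auto).
           set (M := mix nu1 (a i)) in *.
           assert (Rabs (a i ys) / M * M = Rabs (a i ys)) by (field; lra).
           assert ((Rabs (a i ys) / M + 1) * M <= K * M) by (apply Rmult_le_compat_r; lra).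
           assert (- a i ys <= Rabs (a i ys)) by (rewrite <- Rabs_Ropp; apply Rle_abs). nra.
Qed.

Lemma ind_in {X} (B : X -> Prop) x : B x -> ind B x = 1.
Proof. unfold ind. destruct (excluded_middle_informative (B x)); tauto. Qed.
Lemma ind_out {X} (B : X -> Prop) x : ~ B x -> ind B x = 0.
Proof. unfold ind. destruct (excluded_middle_informative (B x)); tauto. Qed.
Lemma ind_01 {X} (B : X -> Prop) x : 0 <= ind B x <= 1.
Proof. unfold ind. destruct (excluded_middle_informative (B x)); lra. Qed.
Lemma ind_True {X} (x : X) : ind (fun _ => True) x = 1.
Proof. apply ind_in. auto. Qed.

Lemma bounded_lin {X} (f g : X -> R) c : bounded f -> bounded g -> bounded (fun x => c * f x + g x).
Proof. intros [M1 H1] [M2 H2]. exists (Rabs c * M1 + M2). intros x.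
  eapply Rle_trans. apply Rabs_triang. rewrite Rabs_mult.
  assert (Rabs c * Rabs (f x) <= Rabs c * M1) by (apply Rmult_le_compat_l; [apply Rabs_pos | auto]).
  specialize (H2 x). lra. Qed.

Lemma bounded_comp_mul {Z X} (f : X -> R) (p : Z -> X) (k : Z -> R) :
  bounded f -> (forall z, Rabs (k z) <= 1) -> bounded (fun z => f (p z) * k z).
Proof. intros [M H] Hk. exists M. intros z. rewrite Rabs_mult.
  specialize (H (p z)). specialize (Hk z). assert (0 <= Rabs (f (p z))) by apply Rabs_pos.
  assert (0 <= Rabs (k z)) by apply Rabs_pos. nra. Qed.

Lemma ind_abs {X} (B : X -> Prop) x : Rabs (ind B x) <= 1.
Proof. destruct (ind_01 B x). rewrite Rabs_right; lra. Qed.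

Section Coh.
Context {T : Type} (D : gset T) (hD : coherent D).

Lemma coh_bd f : D f -> bounded f. Proof. apply hD. Qed.
Lemma coh_pos f : bounded f -> (forall x, 0 <= f x) -> (exists x, f x <> 0) -> D f. Proof. apply hD. Qed.
Lemma coh_scale f lam : 0 < lam -> D f -> D (fun x => lam * f x). Proof. apply hD. Qed.
Lemma coh_add f g : D f -> D g -> D (fun x => f x + g x). Proof. apply hD. Qed.
Lemma coh_neg f : bounded f -> (forall x, f x <= 0) -> ~ D f. Proof. apply hD. Qed.

Lemma coh_exists_pos f : D f -> exists x, 0 < f x.
Proof. intros Hf. apply NNPP. intros Hn. apply (coh_neg f (coh_bd f Hf)); auto.
  intros x. apply Rnot_lt_le. intro. apply Hn. eauto. Qed.

Lemma coh_up f g : D g -> bounded f -> (forall x, g x <= f x) -> D f.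
Proof. intros Hg Hf Hle. destruct (classic (exists x, f x - g x <> 0)) as [Hn | Hz].
  - assert (D (fun x => f x - g x)).
    { apply coh_pos. replace (fun x => f x - g x) with (fun x => (-1) * g x + f x).
      apply bounded_lin; auto. apply coh_bd; auto. apply functional_extensionality; intros; ring.
      intros x; specialize (Hle x); lra. auto. }
    replace f with (fun x => g x + (f x - g x)). apply coh_add; auto.
    apply functional_extensionality; intros; ring.
  - replace f with g; auto. apply functional_extensionality; intros x. apply NNPP; intro.
    apply Hz. exists x. lra. Qed.

Lemma poscombZ n (F : nat -> T -> R) lam : (forall i, (i < n)%nat -> D (F i)) -> (forall i, (i < n)%nat -> 0 <= lam i) ->
  D (fun t => sumR n (fun i => lam i * F i t)) \/ (forall t, sumR n (fun i => lam i * F i t) = 0).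
Proof. induction n; intros HF Hl; simpl. right; auto.
  destruct IHn as [IH | IH]; try (intros; auto with arith).
  - destruct (Req_dec (lam n) 0) as [E0 | E0].
    + left. replace (fun t => sumR n (fun i => lam i * F i t) + lam n * F n t) with (fun t => sumR n (fun i => lam i * F i t)); auto.
      apply functional_extensionality; intros; rewrite E0; ring.
    + left. apply coh_add; auto. apply coh_scale; auto. assert (0 <= lam n) by auto. lra.
  - destruct (Req_dec (lam n) 0) as [E0 | E0].
    + right. intros t. rewrite IH, E0. ring.
    + left. replace (fun t => sumR n (fun i => lam i * F i t) + lam n * F n t) with (fun t => lam n * F n t).
      apply coh_scale; auto. assert (0 <= lam n) by auto. lra.
      apply functional_extensionality; intros; rewrite IH; ring.
Qed.

Lemma poscomb n (F : nat -> T -> R) lam : (forall i, (i < n)%nat -> D (F i)) -> (forall i, (i < n)%nat -> 0 <= lam i) ->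
  (exists i, (i < n)%nat /\ lam i <> 0) -> D (fun t => sumR n (fun i => lam i * F i t)).
Proof. induction n; intros HF Hl [i [Hi Hli]]; simpl. lia.
  destruct (Req_dec (lam n) 0) as [E0 | E0].
  - replace (fun t => sumR n (fun i => lam i * F i t) + lam n * F n t) with (fun t => sumR n (fun i => lam i * F i t)).
    apply IHn; auto. exists i. split; auto. destruct (Nat.eq_dec i n). subst; tauto. lia.
    apply functional_extensionality; intros; rewrite E0; ring.
  - assert (Hs : D (fun t => lam n * F n t)). apply coh_scale; auto. assert (0 <= lam n) by auto. lra.
    destruct (poscombZ n F lam) as [IH | IH]; auto.
    + apply (coh_add _ _ IH Hs).
    + replace (fun t => sumR n (fun i => lam i * F i t) + lam n * F n t) with (fun t => lam n * F n t); auto.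
      apply functional_extensionality; intros; rewrite IH; ring.
Qed.
End Coh.

Definition lsum {T} (l : list (R * (T -> R))) (x : T) : R :=
  fold_right (fun p acc => fst p * snd p x + acc) 0 l.

Section EGen.
Context {T : Type} (A : gset T).

Lemma E_ext f g : (forall x, f x = g x) -> E A f -> E A g.
Proof. intros H Hf. replace g with f; auto. apply functional_extensionality; auto. Qed.

Lemma E_single f : (A f \/ Gpos f) -> E A f.
Proof. intros H. exists ((1, f) :: nil). split. congruence. split. constructor; [simpl; split; [lra | auto] | constructor].
  intros x. simpl. ring. Qed.

Lemma E_scale f lam : 0 < lam -> E A f -> E A (fun x => lam * f x).
Proof. intros Hl [l [Hn [HF Heq]]]. exists (map (fun p => (lam * fst p, snd p)) l). split.
  destruct l; simpl; congruence. split.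
  apply Forall_map. eapply Forall_impl; [|exact HF]. simpl. intros p [Hp Hq]. split; auto. nra.
  intros x. rewrite Heq. clear Heq Hn HF. induction l; simpl. ring. rewrite <- IHl. ring. Qed.

Lemma E_add f g : E A f -> E A g -> E A (fun x => f x + g x).
Proof. intros [l1 [Hn1 [HF1 Heq1]]] [l2 [Hn2 [HF2 Heq2]]]. exists (l1 ++ l2). split.
  destruct l1; simpl; congruence. split. apply Forall_app; auto.
  intros x. rewrite Heq1, Heq2. clear. induction l1; simpl. ring. rewrite <- IHl1. ring. Qed.

Lemma E_bounded f : (forall g, A g -> bounded g) -> E A f -> bounded f.
Proof. intros HA [l [_ [HF Heq]]]. replace f with (lsum l).
  2: { apply functional_extensionality; intros; rewrite Heq; auto. }
  clear Heq. induction l; simpl. exists 0. intros. unfold lsum; simpl. rewrite Rabs_R0. lra.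
  inversion HF; subst. unfold lsum. simpl. apply (bounded_lin (snd a) (lsum l) (fst a)).
  destruct H1 as [_ [H1 | H1]]. apply HA; auto. apply H1. apply IHl; auto. Qed.
End EGen.

Lemma coh_lsum {T} (D : gset T) (hD : coherent D) l :
  l <> nil -> Forall (fun p => 0 < fst p /\ D (snd p)) l -> D (lsum l).
Proof. induction l as [|p l IH]; intros Hn HF. congruence. inversion HF; subst. destruct H1 as [Hp1 Hp2].
  destruct l as [|q l].
  - replace (lsum (p :: nil)) with (fun x => fst p * snd p x). apply coh_scale; auto.
    apply functional_extensionality; intros; unfold lsum; simpl; ring.
  - change (D (fun x => fst p * snd p x + lsum (q :: l) x)). apply coh_add; auto. apply coh_scale; auto.
    apply IH; auto. congruence.
Qed.

Section Inst.
Context {X1 X2 : Type} (BB1 : (X1 -> Prop) -> Prop) (BB2 : (X2 -> Prop) -> Prop)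
  (D1 : gset X1) (D2 : gset X2) (hD1 : coherent D1) (hD2 : coherent D2).

Definition gen12 : gset (X1 * X2) := fun g => A12 BB1 D2 g \/ A21 BB2 D1 g.

Definition NFc m n (a : nat -> X2 -> R) (B : nat -> X1 -> Prop) (b : nat -> X1 -> R) (C : nat -> X2 -> Prop) (h : X1 * X2 -> R) :=
  (forall i, (i < m)%nat -> D2 (a i) /\ (BB1 (B i) \/ B i = (fun _ => True))) /\
  (forall j, (j < n)%nat -> D1 (b j) /\ (BB2 (C j) \/ C j = (fun _ => True))) /\
  (forall z, 0 <= h z).
Definition NFeq m n (a : nat -> X2 -> R) (B : nat -> X1 -> Prop) (b : nat -> X1 -> R) (C : nat -> X2 -> Prop) (h : X1 * X2 -> R) g :=
  forall z, g z = sumR m (fun i => a i (snd z) * ind (B i) (fst z)) + sumR n (fun j => b j (fst z) * ind (C j) (snd z)) + h z.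
Definition NF g := exists m n a B b C h, NFc m n a B b C h /\ NFeq m n a B b C h g.
Definition NFs g := exists m n a B b C h, NFc m n a B b C h /\ NFeq m n a B b C h g /\
  ((0 < m)%nat \/ (0 < n)%nat \/ exists z, h z <> 0).

Lemma NF_add r t lam : NF r -> (gen12 t \/ Gpos t) -> 0 < lam -> NFs (fun z => lam * t z + r z).
Proof.
  intros [m [n [a [B [b [C [h [[Ha [Hb Hh]] Heq]]]]]]]] Ht Hl.
  destruct Ht as [[[f2 [B1 [Hf2 [HB1 ->]]]] | [f1 [B2 [Hf1 [HB2 ->]]]]] | [Hbd [Hnn [z0 Hz0]]]].
  - exists (S m), n, (fun i => if Nat.eq_dec i m then (fun y => lam * f2 y) else a i),
      (fun i => if Nat.eq_dec i m then B1 else B i), b, C, h. split; [split; [|split]|split].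
    + intros i Hi. destruct (Nat.eq_dec i m). split; auto. apply coh_scale; auto. apply Ha. lia.
    + auto.
    + auto.
    + intros z. rewrite Heq. simpl. rewrite (sumR_ext m (fun i => (if Nat.eq_dec i m then fun y => lam * f2 y else a i) (snd z) *
        ind (if Nat.eq_dec i m then B1 else B i) (fst z)) (fun i => a i (snd z) * ind (B i) (fst z))).
      destruct (Nat.eq_dec m m); [|congruence]. ring.
      intros i Hi. destruct (Nat.eq_dec i m). lia. auto.
    + left. lia.
  - exists m, (S n), a, B, (fun j => if Nat.eq_dec j n then (fun x => lam * f1 x) else b j),
      (fun j => if Nat.eq_dec j n then B2 else C j), h. split; [split; [|split]|split].
    + auto.
    + intros i Hi. destruct (Nat.eq_dec i n). split; auto. apply coh_scale; auto. apply Hb. lia.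
    + auto.
    + intros z. rewrite Heq. simpl. rewrite (sumR_ext n (fun j => (if Nat.eq_dec j n then fun x => lam * f1 x else b j) (fst z) *
        ind (if Nat.eq_dec j n then B2 else C j) (snd z)) (fun j => b j (fst z) * ind (C j) (snd z))).
      destruct (Nat.eq_dec n n); [|congruence]. ring.
      intros i Hi. destruct (Nat.eq_dec i n). lia. auto.
    + right; left. lia.
  - exists m, n, a, B, b, C, (fun z => lam * t z + h z). split; [split; [|split]|split].
    + auto.
    + auto.
    + intros z. specialize (Hnn z). specialize (Hh z). nra.
    + intros z. rewrite Heq. ring.
    + right; right. exists z0. specialize (Hnn z0). specialize (Hh z0).
      assert (0 < t z0) by lra. nra.
Qed.

Lemma NF_list l : Forall (fun p => 0 < fst p /\ (gen12 (snd p) \/ Gpos (snd p))) l -> NF (lsum l).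
Proof. induction l as [|p l IH]; intros HF.
  - exists O, O, (fun _ _ => 0), (fun _ _ => True), (fun _ _ => 0), (fun _ _ => True), (fun _ => 0).
    split; [split; [|split]|]. intros; lia. intros; lia. intros; lra. intros z. unfold lsum; simpl. ring.
  - inversion HF; subst. destruct H1. destruct (NF_add (lsum l) (snd p) (fst p)) as [m [n [a [B [b [C [h [Hc [Heq _]]]]]]]]]; auto.
    exists m, n, a, B, b, C, h. split; [auto|]. intros z. exact (Heq z).
Qed.

Lemma E_NFs g : indep_nat_ext BB1 BB2 D1 D2 g -> NFs g.
Proof. intros [l [Hn [HF Heq]]]. destruct l as [|p l]. congruence. inversion HF; subst. destruct H1.
  destruct (NF_add (lsum l) (snd p) (fst p)) as [m [n [a [B [b [C [h [Hc [Heq' Hnt]]]]]]]]]; auto.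
  apply NF_list; auto.
  exists m, n, a, B, b, C, h. split; auto. split; auto. intros z. rewrite <- Heq'. rewrite Heq. simpl. auto.
Qed.

Lemma ind_D {X} (D : gset X) (hD : coherent D) (C : X -> Prop) : (exists y, C y) -> D (ind C).
Proof. intros [y Hy]. apply coh_pos; [auto| | |].
  - exists 1. intros; apply ind_abs.
  - intros; apply ind_01.
  - exists y. rewrite ind_in by auto. lra. Qed.

Lemma marg_fwd (hB1 : forall B, BB1 B -> exists x, B x) (hB2 : forall B, BB2 B -> exists x, B x) (x1 : X1) (x2 : X2)
  (C : X2 -> Prop) (f : X1 -> R) : (exists yc, C yc) -> bounded f ->
  indep_nat_ext BB1 BB2 D1 D2 (fun z => f (fst z) * ind C (snd z)) -> D1 f.
Proof.
  intros [yc Hyc] Hbf HE.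
  destruct (E_NFs _ HE) as [m [n [a [B [b [C' [h [[Ha [Hb Hh]] [Heq Hnt]]]]]]]]].
  set (fam := fun i => if lt_dec i m then a i else if lt_dec i (m + n) then ind (C' (i - m)%nat) else ind C).
  assert (Hfam : forall i, (i < S (m + n))%nat -> D2 (fam i)).
  { intros i Hi. unfold fam. destruct (lt_dec i m). apply Ha; auto. destruct (lt_dec i (m + n)).
    - apply ind_D; auto. destruct (Hb (i - m)%nat) as [_ [HB | HB]]. lia. apply hB2; auto. rewrite HB. exists x2; auto.
    - apply ind_D; eauto. }
  destruct (key (S (m + n)) X2 fam) as [nu [Hw Hpos]].
  { intros lam Hnn Hnz. apply (coh_exists_pos D2 hD2). apply poscomb; auto. }
  assert (Pa : forall i, (i < m)%nat -> 0 < mix nu (a i)).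
  { intros i Hi. specialize (Hpos i). unfold fam in Hpos. destruct (lt_dec i m); [|lia]. apply Hpos. lia. }
  assert (Pc : forall j, (j < n)%nat -> 0 < mix nu (ind (C' j))).
  { intros j Hj. specialize (Hpos (m + j)%nat). unfold fam in Hpos. destruct (lt_dec (m + j) m); [lia|].
    destruct (lt_dec (m + j) (m + n)); [|lia]. replace (m + j - m)%nat with j in Hpos by lia. apply Hpos. lia. }
  assert (PC : 0 < mix nu (ind C)).
  { specialize (Hpos (m + n)%nat). unfold fam in Hpos. destruct (lt_dec (m + n) m); [lia|].
    destruct (lt_dec (m + n) (m + n)); [lia|]. apply Hpos. lia. }
  assert (Hmain : forall x, f x * mix nu (ind C) = sumR m (fun i => ind (B i) x * mix nu (a i)) +
      sumR n (fun j => mix nu (ind (C' j)) * b j x) + mix nu (fun y => h (x, y))).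
  { intros x. rewrite <- mix_scal.
    rewrite (mix_ext nu _ (fun y => (sumR m (fun i => ind (B i) x * a i y) + sumR n (fun j => b j x * ind (C' j) y)) + h (x, y))).
    - rewrite mix_plus, mix_plus, mix_sumR, mix_sumR. f_equal. f_equal.
      + apply sumR_ext. intros. apply mix_scal.
      + apply sumR_ext. intros. rewrite mix_scal. ring.
    - intros y. specialize (Heq (x, y)). simpl in Heq. rewrite Heq. f_equal. f_equal. apply sumR_ext. intros; ring. }
  assert (HPhi : forall x, 0 <= sumR m (fun i => ind (B i) x * mix nu (a i))).
  { intros x. apply sumR_nonneg. intros i Hi. apply Rmult_le_pos. apply ind_01. left; auto. }
  assert (Hmh : forall x, 0 <= mix nu (fun y => h (x, y))).
  { intros x. apply mix_nonneg; auto. }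
  destruct (Nat.eq_dec n 0) as [Hn0 | Hn0].
  - subst n. simpl in Hmain.
    assert (Hf0 : forall x, 0 <= f x).
    { intros x. specialize (Hmain x). specialize (HPhi x). specialize (Hmh x).
      apply Rnot_lt_le. intro. nra. }
    apply coh_pos; auto.
    destruct (Nat.eq_dec m 0) as [Hm0 | Hm0].
    + subst m. destruct Hnt as [Hnt | [Hnt | [z1 Hz1]]]; try lia.
      exists (fst z1). specialize (Heq z1). simpl in Heq. intro Hc. rewrite Hc in Heq. lra.
    + destruct (Ha 0%nat) as [_ [HB | HB]]. lia.
      * destruct (hB1 _ HB) as [x0 Hx0]. exists x0.
        assert (ind (B 0%nat) x0 * mix nu (a 0%nat) <= sumR m (fun i => ind (B i) x0 * mix nu (a i))).
        { apply (sumR_ge_term m (fun i => ind (B i) x0 * mix nu (a i))). intros i Hi. apply Rmult_le_pos. apply ind_01. left; auto. lia. }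
        rewrite ind_in in H by auto. specialize (Pa 0%nat). specialize (Hmain x0). specialize (Hmh x0).
        intro Hc. rewrite Hc in Hmain. assert (0 < mix nu (a 0%nat)) by (apply Pa; lia). lra.
      * exists x1.
        assert (ind (B 0%nat) x1 * mix nu (a 0%nat) <= sumR m (fun i => ind (B i) x1 * mix nu (a i))).
        { apply (sumR_ge_term m (fun i => ind (B i) x1 * mix nu (a i))). intros i Hi. apply Rmult_le_pos. apply ind_01. left; auto. lia. }
        rewrite HB in H. rewrite ind_True in H. specialize (Pa 0%nat). specialize (Hmain x1). specialize (Hmh x1).
        intro Hc. rewrite Hc in Hmain. assert (0 < mix nu (a 0%nat)) by (apply Pa; lia). lra.
  - assert (HPsi : D1 (fun x => sumR n (fun j => mix nu (ind (C' j)) * b j x))).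
    { apply poscomb; auto. intros j Hj. apply Hb; auto. intros j Hj. left; auto. exists 0%nat. split. lia.
      assert (0 < mix nu (ind (C' 0%nat))) by (apply Pc; lia). lra. }
    apply (coh_up D1 hD1 f (fun x => / mix nu (ind C) * sumR n (fun j => mix nu (ind (C' j)) * b j x))); auto.
    + apply coh_scale; auto. apply Rinv_0_lt_compat; auto.
    + intros x. specialize (Hmain x). specialize (HPhi x). specialize (Hmh x).
      set (P := sumR n (fun j => mix nu (ind (C' j)) * b j x)) in *.
      assert (/ mix nu (ind C) * P <= / mix nu (ind C) * (f x * mix nu (ind C))).
      { apply Rmult_le_compat_l. left; apply Rinv_0_lt_compat; auto. lra. }
      replace (/ mix nu (ind C) * (f x * mix nu (ind C))) with (f x) in H by (field; lra). auto.
Qed.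
End Inst.

Lemma swap_E {X1 X2 : Type} (BB1 : (X1 -> Prop) -> Prop) (BB2 : (X2 -> Prop) -> Prop) (D1 : gset X1) (D2 : gset X2) g :
  indep_nat_ext BB1 BB2 D1 D2 g -> indep_nat_ext BB2 BB1 D2 D1 (fun z => g (snd z, fst z)).
Proof.
  intros [l [Hn [HF Heq]]].
  exists (map (fun p => (fst p, fun z : X2 * X1 => snd p (snd z, fst z))) l). split.
  destruct l; simpl; congruence. split.
  - apply Forall_map. eapply Forall_impl; [|exact HF]. simpl. intros p [Hp Hg]. split; auto.
    destruct Hg as [[[f2 [B1 [Hf2 [HB1 Heqp]]]] | [f1 [B2 [Hf1 [HB2 Heqp]]]]] | [[M HM] [Hnn [z0 Hz0]]]].
    + left. right. exists f2, B1. split; auto. split; auto. rewrite Heqp. reflexivity.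
    + left. left. exists f1, B2. split; auto. split; auto. rewrite Heqp. reflexivity.
    + right. split; [|split]. exists M; intros; apply HM. intros; apply Hnn. exists (snd z0, fst z0). destruct z0; auto.
  - intros z. rewrite Heq. clear. induction l; simpl. auto. rewrite IHl. auto.
Qed.

Theorem theorem16 (X1 X2 : Type) (x1 : X1) (x2 : X2)
    (BB1 : (X1 -> Prop) -> Prop) (BB2 : (X2 -> Prop) -> Prop)
    (hB1 : forall B, BB1 B -> exists x, B x)
    (hB2 : forall B, BB2 B -> exists x, B x)
    (D1 : gset X1) (D2 : gset X2)
    (hD1 : coherent D1) (hD2 : coherent D2) :
  indep_product BB1 BB2 D1 D2 (indep_nat_ext BB1 BB2 D1 D2) /\
  (forall D : gset (X1 * X2), indep_product BB1 BB2 D1 D2 D ->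
     forall f, indep_nat_ext BB1 BB2 D1 D2 f -> D f).
Proof.
  set (EE := indep_nat_ext BB1 BB2 D1 D2).
  assert (MargF : forall C, (BB2 C \/ C = (fun _ => True)) -> forall f, bounded f ->
     (EE (fun z => f (fst z) * ind C (snd z)) <-> D1 f)).
  { intros C HC f Hf. split.
    - apply (marg_fwd BB1 BB2 D1 D2 hD1 hD2 hB1 hB2 x1 x2); auto.
      destruct HC as [HC | ->]. apply hB2; auto. exists x2; auto.
    - intros HD. apply E_single. left. right. exists f, C. auto. }
  assert (MargS : forall C, (BB1 C \/ C = (fun _ => True)) -> forall f, bounded f ->
     (EE (fun z => f (snd z) * ind C (fst z)) <-> D2 f)).
  { intros C HC f Hf. split.
    - intros HE. apply swap_E in HE. simpl in HE.
      apply (marg_fwd BB2 BB1 D2 D1 hD2 hD1 hB2 hB1 x2 x1 C f); auto.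
      destruct HC as [HC | ->]. apply hB1; auto. exists x1; auto.
    - intros HD. apply E_single. left. left. exists f, C. auto. }
  assert (Hm1 : forall f, bounded f -> (EE (fun z => f (fst z)) <-> D1 f)).
  { intros f Hf. rewrite <- (MargF (fun _ => True)); auto. split; apply E_ext; intros; rewrite ind_True; ring. }
  assert (Hm2 : forall f, bounded f -> (EE (fun z => f (snd z)) <-> D2 f)).
  { intros f Hf. rewrite <- (MargS (fun _ => True)); auto. split; apply E_ext; intros; rewrite ind_True; ring. }
  assert (Hcoh : coherent EE).
  { split; [|split; [|split; [|split]]].
    - intros f Hf. apply (E_bounded (fun g => A12 BB1 D2 g \/ A21 BB2 D1 g) f); auto.
      intros g [[f2 [B1 [Hf2 [_ ->]]]] | [f1 [B2 [Hf1 [_ ->]]]]].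
      + apply bounded_comp_mul. apply (coh_bd D2 hD2); auto. intros; apply ind_abs.
      + apply bounded_comp_mul. apply (coh_bd D1 hD1); auto. intros; apply ind_abs.
    - intros f Hb Hnn Hnz. apply E_single. right. split; auto.
    - intros f lam Hl Hf. apply E_scale; auto.
    - intros f g Hf Hg. apply E_add; auto.
    - intros f Hb Hle Hf.
      assert (H0 : EE (fun _ => 0)).
      { destruct (classic (exists z, f z <> 0)) as [[z Hz] | Hz].
        - assert (EE (fun z => - f z)).
          { apply E_single. right. split; [|split].
            - destruct Hb as [M HM]. exists M. intros; rewrite Rabs_Ropp; auto.
            - intros; specialize (Hle x); lra.
            - exists z. lra. }
          apply (E_ext _ (fun x => f x + - f x)). intros; ring. apply E_add; auto.
        - apply (E_ext _ f); auto. intros x. apply NNPP. intro. apply Hz. eauto. }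
      assert (D1 (fun _ => 0)).
      { apply (MargF (fun _ => True)); auto. exists 0; intros; rewrite Rabs_R0; lra.
        apply (E_ext _ (fun _ => 0)); auto. intros; ring. }
      apply (coh_neg D1 hD1 (fun _ => 0)); auto. exists 0; intros; rewrite Rabs_R0; lra. intros; lra. }
  split.
  - split; [split; [|split]|split].
    + auto.
    + intros B2 HB2 f. unfold cmarg1, marg1. split; intros [Hb H]; split; auto.
      * apply Hm1; auto. apply (MargF B2); auto.
      * apply (MargF B2); auto. apply Hm1; auto.
    + intros B1 HB1 f. unfold cmarg2, marg2. split; intros [Hb H]; split; auto.
      * apply Hm2; auto. apply (MargS B1); auto.
      * apply (MargS B1); auto. apply Hm2; auto.
    + intros f. unfold marg1. split. intros [Hb H]. apply Hm1; auto.
      intros H. assert (bounded f) by (apply (coh_bd D1 hD1); auto). split; auto. apply Hm1; auto.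
    + intros f. unfold marg2. split. intros [Hb H]. apply Hm2; auto.
      intros H. assert (bounded f) by (apply (coh_bd D2 hD2); auto). split; auto. apply Hm2; auto.
  - intros D [[HcD [Hc1 Hc2]] [Hmg1 Hmg2]] f [l [Hn [HF Heq]]].
    replace f with (lsum l) by (apply functional_extensionality; intros; rewrite Heq; auto).
    apply coh_lsum; auto. eapply Forall_impl; [|exact HF]. simpl. intros p [Hp Hg]. split; auto.
    destruct Hg as [[[f2 [B1 [Hf2 [HB1 ->]]]] | [f1 [B2 [Hf1 [HB2 ->]]]]] | Hpos].
    + apply Hmg2 in Hf2. destruct HB1 as [HB1 | ->].
      * apply (Hc2 B1 HB1 f2) in Hf2. destruct Hf2; auto.
      * destruct Hf2 as [_ Hf2]. replace (fun z : X1 * X2 => f2 (snd z) * ind (fun _ => True) (fst z)) with (fun z : X1 * X2 => f2 (snd z)); auto.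
        apply functional_extensionality; intros; rewrite ind_True; ring.
    + apply Hmg1 in Hf1. destruct HB2 as [HB2 | ->].
      * apply (Hc1 B2 HB2 f1) in Hf1. destruct Hf1; auto.
      * destruct Hf1 as [_ Hf1]. replace (fun z : X1 * X2 => f1 (fst z) * ind (fun _ => True) (snd z)) with (fun z : X1 * X2 => f1 (fst z)); auto.
        apply functional_extensionality; intros; rewrite ind_True; ring.
    + destruct Hpos as [Hb [Hnn Hnz]]. apply coh_pos; auto.
Qed.
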